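(* Let $H\in\mathbb{R}^{N\times n}$ have full column rank, let $\epsilon>0$, and let $\mathcal{T}\subset\{1,\dots,N\}$ be a nonempty index set such that $H_{\mathcal{T}^c}$ has full column rank and $|\mathcal{T}|>\underline{\sigma}_{\mathcal{T}^c}^2/\overline{\sigma}_{\mathcal{T}}^2$, where $\overline{\sigma}_{\mathcal{T}}$ is the largest singular value of $H_{\mathcal{T}}$ and $\underline{\sigma}_{\mathcal{T}^c}$ is the smallest nonzero singular value of $H_{\mathcal{T}^c}$. Define $$\sigma_1=\max_{\mathbf{v}\in\mathbb{R}^n\setminus\{\mathbf{0}\}}\frac{\|H_{\mathcal{T}}\mathbf{v}\|_1}{\|H_{\mathcal{T}^c}\mathbf{v}\|_1},$$ and suppose the set $\{\mathbf{w}\in\mathrm{range}(H):\|\mathbf{w}_{\mathcal{T}}\|_1>\|\mathbf{w}_{\mathcal{T}^c}\|_1\}$ is nonempty. Let $\mathbf{x}_e$ be an optimal solution of $$\max_{\mathbf{x}\in\mathbb{R}^n}\ \|H_{\mathcal{T}}\mathbf{x}\|_1\quad\text{subject to}\quad\|H_{\mathcal{T}^c}\mathbf{x}\|_1\le\epsilon,$$ and define the attack vector $\mathbf{e}\in\mathbb{R}^N$ by $\mathbf{e}_{\mathcal{T}}=H_{\mathcal{T}}\mathbf{x}_e$, $\mathbf{e}_{\mathcal{T}^c}=\mathbf{0}$. Let $\mathbf{x}^\star\in\mathbb{R}^n$, $\mathbf{y}^\star=H\mathbf{x}^\star$ and $\mathbf{y}=\mathbf{y}^\star+\mathbf{e}$,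 and let $\mathcal{D}(\mathbf{y})$ be any minimizer of $\mathbf{z}\mapsto\|\mathbf{y}-H\mathbf{z}\|_1$ over $\mathbb{R}^n$ (note $\mathcal{D}(\mathbf{y}^\star)=\mathbf{x}^\star$). Then $$\|\mathbf{x}^\star-\mathcal{D}(\mathbf{y})\|_2\ge\frac{\sigma_1-1}{\sqrt{|\mathcal{T}|}\,\overline{\sigma}_{\mathcal{T}}-\underline{\sigma}_{\mathcal{T}^c}}\,\epsilon>0\qquad\text{and}\qquad\|\mathbf{y}-H\mathcal{D}(\mathbf{y})\|_2\le\epsilon.$$ Consequently the attack $\mathbf{e}$ is $(\epsilon,\alpha)$-successful for every $\alpha\le\frac{\sigma_1-1}{\sqrt{|\mathcal{T}|}\overline{\sigma}_{\mathcal{T}}-\underline{\sigma}_{\mathcal{T}^c}}\epsilon$.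
   Context: For $\mathcal{T}\subseteq\{1,\dots,N\}$, $H_{\mathcal{T}}$ denotes the submatrix of $H$ formed by the rows indexed by $\mathcal{T}$, $\mathbf{w}_{\mathcal{T}}$ the subvector of $\mathbf{w}$ indexed by $\mathcal{T}$, and $\mathcal{T}^c$ the complement in $\{1,\dots,N\}$. The ($\ell_1$) decoder is $\mathcal{D}(\mathbf{y})\in\arg\min_{\mathbf{z}\in\mathbb{R}^n}\|\mathbf{y}-H\mathbf{z}\|_1$. An attack $\mathbf{e}$ is called $(\epsilon,\alpha)$-successful if, with $\mathbf{y}=\mathbf{y}^\star+\mathbf{e}$ ($\mathbf{y}^\star$ the true, unattacked measurement and $\mathbf{x}^\star=\mathcal{D}(\mathbf{y}^\star)$), one has $\|\mathbf{x}^\star-\mathcal{D}(\mathbf{y})\|_2\ge\alpha$ and $\|\mathbf{y}-H\mathcal{D}(\mathbf{y})\|_2\le\epsilon$. *)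

(* Defs.v *)
From HB Require Import structures.
From mathcomp Require Import all_boot all_order all_algebra.
From mathcomp Require Import all_classical reals.
Set Implicit Arguments. Unset Strict Implicit. Unset Printing Implicit Defensive.
Import Order.TTheory GRing.Theory Num.Theory.
Local Open Scope ring_scope.
Local Open Scope classical_set_scope.

Section Defs.
Variable R : realType.

Definition subrows (N m : nat) (T : {set 'I_N}) (A : 'M[R]_(N, m)) : 'M[R]_(#|T|, m) :=
  \matrix_(i < #|T|, j < m) A (enum_val i) j.

Definition norm1 (k : nat) (v : 'cV[R]_k) : R := \sum_(i < k) `|v i 0|.
Definition norm2 (k : nat) (v : 'cV[R]_k) : R := Num.sqrt (\sum_(i < k) (v i 0) ^+ 2).

Definition sigma_max (p m : nat) (A : 'M[R]_(p, m)) : R :=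
  Num.sqrt (sup [set a : R | eigenvalue (A^T *m A) a]).

Definition sigma_min_nz (p m : nat) (A : 'M[R]_(p, m)) : R :=
  Num.sqrt (inf [set a : R | eigenvalue (A^T *m A) a /\ 0 < a]).

Definition sigma1 (N n : nat) (H : 'M[R]_(N, n)) (T : {set 'I_N}) : R :=
  sup [set r : R | exists2 v : 'cV[R]_n, v != 0 &
        r = norm1 (subrows T H *m v) / norm1 (subrows (~: T) H *m v)].

Definition l1_decoder (N n : nat) (H : 'M[R]_(N, n)) (y : 'cV[R]_N) (xd : 'cV[R]_n) :=
  forall z : 'cV[R]_n, norm1 (y - H *m xd) <= norm1 (y - H *m z).

Definition attack_successful (N n : nat) (H : 'M[R]_(N, n)) (xstar : 'cV[R]_n)
    (e : 'cV[R]_N) (eps alpha : R) :=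
  forall xd : 'cV[R]_n, l1_decoder H (H *m xstar + e) xd ->
    alpha <= norm2 (xstar - xd) /\ norm2 (H *m xstar + e - H *m xd) <= eps.

End Defs.

(* Main.v *)
Require Import Defs.
From HB Require Import structures.
From mathcomp Require Import all_boot all_order all_algebra.
From mathcomp Require Import all_classical reals.
From mathcomp Require Import complex.
From mathcomp Require Import lra.
Import Order.TTheory GRing.Theory Num.Theory.
Local Open Scope ring_scope.
Set Implicit Arguments. Unset Strict Implicit. Unset Printing Implicit Defensive.
Lemma realC_real (R : rcfType) (x : R) : (x%:C)%C \is Num.real.
Proof. by rewrite complex_real. Qed.

Lemma conjC_realC (R : rcfType) (x : R) : ((x%:C)%C)^* = (x%:C)%C.
Proof. exact/conj_Creal/realC_real. Qed.

Section Spec.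
Variable R : realType.
Local Notation C := (R[i]).
Local Notation f := (real_complex R).

Lemma spec n (M : 'M[R]_n) : M^T = M ->
  exists d : 'I_n -> R,
   [/\ (forall i, eigenvalue M (d i)),
   (forall a, eigenvalue M a -> exists i, a = d i) &
   (forall u : 'cV[R]_n, exists c : 'I_n -> R, [/\ (forall i, 0 <= c i),
       \sum_i c i = \sum_i (u i 0)^+2 & (u^T *m M *m u) 0 0 = \sum_i d i * c i])].
Proof.
move=> MT.
set Mc := map_mx f M.
have McT : map_mx Num.conj Mc^T = Mc.
  by apply/matrixP => i j; rewrite !mxE conjC_realC; have := congr1 (fun A : 'M[R]_n => A i j) MT; rewrite mxE => ->.
have Mch : Mc \is hermsymmx by apply/is_hermitianmxP; rewrite expr0 scale1r McT.
have /orthomx_spectralP Hdec := hermitian_normalmx Mch.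
set P := spectralmx Mc in Hdec; set D := spectral_diag Mc in Hdec.
have PU : P \is unitarymx by exact: spectral_unitarymx.
have Pu : P \in unitmx by exact: unitarymx_unit.
have iP : invmx P = map_mx Num.conj P^T by exact: invmx_unitary.
have Dr := hermitian_spectral_diag_real Mch.
pose d i := complex.Re (D 0 i).
have Dd i : D 0 i = f (d i).
  by rewrite /d RRe_real //; move/mxOverP: Dr; apply.
exists d; split.
- move=> i; rewrite -(eigenvalue_map f) /= -Dd; apply/eigenvalueP.
  exists (row i P).
    rewrite -row_mul -/Mc Hdec !mulmxA mulmxV // mul1mx.
    apply/rowP=> k; rewrite !mxE (bigD1 i) //= big1 ?addr0 => [|j ji].
      by rewrite !mxE eqxx mulr1n.
    by rewrite !mxE eq_sym (negPf ji) mulr0n mul0r.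
  apply/eqP => /(congr1 (mulmx^~ (invmx P))); rewrite rowE mulmxK // mul0mx.
  by move/matrixP/(_ 0 i); rewrite !mxE !eqxx /= => /eqP; rewrite oner_eq0.
- move=> a; rewrite -(eigenvalue_map f) => /eigenvalueP [v vM v0].
  set w := v *m invmx P.
  have w0 : w != 0.
    apply: contra v0 => /eqP w0; apply/eqP.
    by rewrite -[v](mulmxKV Pu) -/w w0 mul0mx.
  have wD : w *m diag_mx D = f a *: w.
    rewrite /w scalemxAl -vM -/Mc Hdec !mulmxA mulmxK //.
  have /existsP [j wj] : [exists j, w 0 j != 0].
    apply: contraR w0 => /existsPn wj.
    apply/eqP. apply/rowP => k; move: (wj k); rewrite negbK => /eqP ->; by rewrite mxE.
  exists j; apply: (fmorph_inj f) => /=; rewrite -Dd.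
  move/matrixP/(_ 0 j): wD; rewrite mul_mx_diag mxE [X in _ = X]mxE -/w => /eqP.
  by rewrite mulrC -subr_eq0 -mulrBl mulf_eq0 (negPf wj) orbF subr_eq0 => /eqP.
move=> u.
set uc := map_mx f u.
set q := P *m uc.
set qs := uc^T *m invmx P.
have ucT : map_mx Num.conj uc^T = uc^T.
  by apply/matrixP => i j; rewrite !mxE conjC_realC.
have qsE j : qs 0 j = (q j 0)^*.
  rewrite /qs iP -ucT. rewrite -map_mxM. by rewrite -trmx_mul !mxE.
pose c i := complex.Re (q i 0) ^+ 2 + complex.Im (q i 0) ^+ 2.
have fc i : f (c i) = (q i 0)^* * q i 0.
  by rewrite /c add_Re2_Im2 normCK mulrC.
exists c; split.
- by move=> i; rewrite /c addr_ge0 // sqr_ge0.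
- apply: (fmorph_inj f) => /=; rewrite !rmorph_sum /=.
  have -> : \sum_i f (u i 0 ^+ 2) = (uc^T *m uc) 0 0.
    by rewrite mxE; apply: eq_bigr => i _; rewrite !mxE rmorphXn /= expr2.
  rewrite -{2}(mulKmx Pu uc) [uc^T *m _]mulmxA -/q -/qs mxE.
  by apply: eq_bigr => i _; rewrite fc qsE.
apply: (fmorph_inj f) => /=; rewrite rmorph_sum /=.
have -> : f ((u^T *m M *m u) 0 0) = (uc^T *m Mc *m uc) 0 0.
  by rewrite /uc /Mc map_trmx -!map_mxM [RHS]mxE.
rewrite Hdec !mulmxA -/qs -!mulmxA -/q mulmxA mxE.
rewrite -/qs; apply: eq_bigr => j _; rewrite mul_diag_mx mxE qsE rmorphM /= fc Dd.
by rewrite mulrCA.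
Qed.
End Spec.
Section Norms.
Variable R : realType.

Lemma subrowsM N m p (T : {set 'I_N}) (A : 'M[R]_(N, m)) (B : 'M[R]_(m, p)) :
  subrows T (A *m B) = subrows T A *m B.
Proof. by apply/matrixP => i j; rewrite !mxE; apply: eq_bigr => k _; rewrite mxE. Qed.

Lemma subrowsB N m (T : {set 'I_N}) (A B : 'M[R]_(N, m)) :
  subrows T (A - B) = subrows T A - subrows T B.
Proof. by apply/matrixP => i j; rewrite !mxE. Qed.

Lemma subrowsD N m (T : {set 'I_N}) (A B : 'M[R]_(N, m)) :
  subrows T (A + B) = subrows T A + subrows T B.
Proof. by apply/matrixP => i j; rewrite !mxE. Qed.

Lemma norm1_ge0 k (v : 'cV[R]_k) : 0 <= norm1 v.
Proof. by rewrite /norm1 sumr_ge0. Qed.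

Lemma norm1D k (v w : 'cV[R]_k) : norm1 (v + w) <= norm1 v + norm1 w.
Proof.
rewrite /norm1 -big_split /=; apply: ler_sum => i _; rewrite mxE; exact: ler_normD.
Qed.

Lemma norm1N k (v : 'cV[R]_k) : norm1 (- v) = norm1 v.
Proof. by rewrite /norm1; apply: eq_bigr => i _; rewrite mxE normrN. Qed.

Lemma norm1Z k (a : R) (v : 'cV[R]_k) : norm1 (a *: v) = `|a| * norm1 v.
Proof. by rewrite /norm1 mulr_sumr; apply: eq_bigr => i _; rewrite mxE normrM. Qed.

Lemma norm10 k : norm1 (0 : 'cV[R]_k) = 0.
Proof. by rewrite /norm1 big1 // => i _; rewrite mxE normr0. Qed.

Lemma norm1_eq0 k (v : 'cV[R]_k) : norm1 v = 0 -> v = 0.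
Proof.
move=> /eqP; rewrite /norm1 psumr_eq0 // => /allP H.
apply/matrixP => i j; rewrite ord1 mxE; apply/eqP; rewrite -normr_eq0.
exact: H (mem_index_enum _).
Qed.

Lemma norm1_split N (T : {set 'I_N}) (v : 'cV[R]_N) :
  norm1 v = norm1 (subrows T v) + norm1 (subrows (~: T) v).
Proof.
rewrite /norm1 (bigID (fun i => i \in T)) /=.
congr (_ + _).
  rewrite big_enum_val.
  by apply: eq_bigr => i _; rewrite mxE.
rewrite (eq_bigl (fun i => i \in ~: T)); last by move=> i; rewrite !inE.
rewrite big_enum_val.
by apply: eq_bigr => i _; rewrite mxE.
Qed.

Definition sq k (v : 'cV[R]_k) := \sum_(i < k) (v i 0) ^+ 2.

Lemma sq_ge0 k (v : 'cV[R]_k) : 0 <= sq v.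
Proof. by rewrite /sq sumr_ge0 // => i _; rewrite sqr_ge0. Qed.

Lemma norm2_sq k (v : 'cV[R]_k) : norm2 v ^+ 2 = sq v.
Proof. by rewrite /norm2 sqr_sqrtr // sq_ge0. Qed.

Lemma norm2_ge0 k (v : 'cV[R]_k) : 0 <= norm2 v.
Proof. exact: sqrtr_ge0. Qed.

Lemma norm2N k (v : 'cV[R]_k) : norm2 (- v) = norm2 v.
Proof. by rewrite /norm2; congr Num.sqrt; apply: eq_bigr => i _; rewrite mxE sqrrN. Qed.

Lemma sq_le_norm1 k (v : 'cV[R]_k) : sq v <= norm1 v ^+ 2.
Proof.
rewrite /sq /norm1.
have [] : 0 <= \sum_(i < k) `|v i 0| /\ \sum_(i < k) (v i 0) ^+ 2 <= (\sum_(i < k) `|v i 0|) ^+ 2.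
  apply: (big_rec2 (fun a b => 0 <= b /\ a <= b ^+ 2)); first by rewrite expr0n lexx.
  move=> i a b _ [hb IH]; split; first by rewrite addr_ge0.
  have h0 := normr_ge0 (v i 0); rewrite -[(v i 0) ^+ 2]real_normK ?num_real //.
  nra.
by [].
Qed.

Lemma norm2_le_norm1 k (v : 'cV[R]_k) : norm2 v <= norm1 v.
Proof.
rewrite /norm2 -[leRHS](ger0_norm (norm1_ge0 v)) -sqrtr_sqr.
by rewrite ler_sqrt ?sqr_ge0 // sq_le_norm1.
Qed.

Lemma cs_sum k (a : 'I_k -> R) :
  (\sum_(i < k) a i) ^+ 2 <= k%:R * \sum_(i < k) (a i) ^+ 2.
Proof.
elim: k a => [|k IH] a; first by rewrite !big_ord0 expr0n mul0r.
rewrite !big_ord_recr /=.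
set S := \sum_(i < k) _; set Q := \sum_(i < k) _.
have hI := IH (fun i => a (widen_ord (leqnSn k) i)).
have h1 := sqr_ge0 (S - k%:R * a ord_max).
have hQ : 0 <= Q by rewrite sumr_ge0 // => i _; rewrite sqr_ge0.
rewrite -/S -/Q in hI; rewrite -[k.+1]addn1 natrD.
have := ler0n R k; rewrite le_eqVlt => /orP[/eqP k0|hk]; last by nra.
rewrite -k0 mul0r in hI *.
have S0 : S = 0.
  by apply/eqP; rewrite -sqrf_eq0 eq_le hI sqr_ge0.
rewrite S0; nra.
Qed.

Lemma norm1_le_norm2 k (v : 'cV[R]_k) : norm1 v <= Num.sqrt k%:R * norm2 v.
Proof.
rewrite /norm2 -sqrtrM ?ler0n // -[leLHS](ger0_norm (norm1_ge0 v)) -sqrtr_sqr.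
rewrite ler_sqrt; last by rewrite mulr_ge0 ?ler0n // sumr_ge0 // => i _; rewrite sqr_ge0.
have := cs_sum (fun i => `|v i 0|); rewrite /norm1.
have -> // : \sum_(i < k) `|v i 0| ^+ 2 = \sum_(i < k) v i 0 ^+ 2.
by apply: eq_bigr => i _; rewrite real_normK ?num_real.
Qed.



Lemma symAtA p m (A : 'M[R]_(p, m)) : (A^T *m A)^T = A^T *m A.
Proof. by rewrite trmx_mul trmxK. Qed.

Lemma sq_mul p m (A : 'M[R]_(p, m)) (u : 'cV[R]_m) :
  sq (A *m u) = (u^T *m (A^T *m A) *m u) 0 0.
Proof.
rewrite mulmxA -trmx_mul -mulmxA mxE /sq.
by apply: eq_bigr => i _; rewrite expr2 [in RHS]mxE.
Qed.

Lemma sq_eq0 k (v : 'cV[R]_k) : sq v = 0 -> v = 0.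
Proof.
move=> /eqP; rewrite /sq psumr_eq0 => [/allP H|i _]; last by rewrite sqr_ge0.
apply/matrixP => i j; rewrite ord1 mxE; apply/eqP; rewrite -sqrf_eq0.
exact: H (mem_index_enum _).
Qed.

Lemma sigma_max_ub p m (A : 'M[R]_(p, m)) (u : 'cV[R]_m) :
  norm2 (A *m u) <= sigma_max A * norm2 u.
Proof.
have [d [dE Ed Ray]] := spec (symAtA A).
have [c [c0 csum ceq]] := Ray u.
set E := [set a : R | eigenvalue (A^T *m A) a]%classic.
have ubE : has_ubound E.
  exists (\sum_i `|d i|); move=> a Ea; have [i ->] := Ed a Ea.
  apply: le_trans (ler_norm _) _; rewrite (bigD1 i) //= ler_wpDr //.
  by rewrite sumr_ge0.
have dS i : d i <= sup E := ub_le_sup ubE (dE i).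
have h : sq (A *m u) <= sup E * sq u.
  rewrite sq_mul ceq /sq -csum mulr_sumr; apply: ler_sum => i _.
  by rewrite ler_wpM2r.
rewrite /sigma_max -/E /norm2; apply: le_trans (ler_wsqrtr h) _.
have [S0|S0] := leP 0 (sup E); first by rewrite sqrtrM.
rewrite ler0_sqrtr ?mulr_ge0 ?sqrtr_ge0 //.
by rewrite nmulr_rle0 // sq_ge0.
Qed.

Lemma rank_inj k m (B : 'M[R]_(k, m)) (w : 'cV[R]_m) :
  \rank B = m -> B *m w = 0 -> w = 0.
Proof.
move=> rB Bw; have rf : row_free B^T by rewrite /row_free mxrank_tr rB.
apply: trmx_inj; rewrite trmx0; apply/eqP.
by rewrite -(mulmx_free_eq0 _ rf) -trmx_mul Bw trmx0.
Qed.

Lemma sq_gt0 k (v : 'cV[R]_k) : v != 0 -> 0 < sq v.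
Proof.
move=> v0; rewrite lt_neqAle sq_ge0 andbT; apply: contra v0.
by move=> /eqP/esym/sq_eq0 ->.
Qed.

Lemma sigma_min_lb k m (B : 'M[R]_(k, m)) (u : 'cV[R]_m) :
  \rank B = m -> sigma_min_nz B * norm2 u <= norm2 (B *m u).
Proof.
move=> rB.
have [d [dE Ed Ray]] := spec (symAtA B).
have dpos i : 0 < d i.
  have /eigenvalueP [v vM v0] := dE i.
  have h1 : sq (B *m v^T) = d i * sq v^T.
    rewrite sq_mul trmxK vM -scalemxAl mxE; congr (_ * _); rewrite mxE /sq.
    by apply: eq_bigr => j _; rewrite !mxE expr2.
  have v0' : v^T != 0 by apply: contra v0 => /eqP vT0; apply/eqP; apply: trmx_inj; rewrite vT0 trmx0.
  have h2 : 0 < sq (B *m v^T).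
    by apply: sq_gt0; apply: contra v0' => /eqP/(rank_inj rB) ->.
  by rewrite h1 in h2; rewrite -(pmulr_lgt0 _ (sq_gt0 v0')).
have [c [c0 csum ceq]] := Ray u.
set E := [set a : R | eigenvalue (B^T *m B) a /\ 0 < a]%classic.
have lbE : has_lbound E by exists 0; move=> a [_ /ltW].
have dI i : inf E <= d i := ge_inf lbE (conj (dE i) (dpos i)).
rewrite /sigma_min_nz -/E; change (Num.sqrt (inf E) * Num.sqrt (sq u) <= Num.sqrt (sq (B *m u))).
have [I0|I0] := leP 0 (inf E); last by rewrite ltr0_sqrtr // mul0r sqrtr_ge0.
rewrite -sqrtrM //; apply: ler_wsqrtr.
rewrite sq_mul ceq /sq -csum mulr_sumr; apply: ler_sum => i _.
by rewrite ler_wpM2r.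
Qed.

End Norms.

Theorem theorem2 (R : realType) (N n : nat) (H : 'M[R]_(N, n)) (eps : R)
  (T : {set 'I_N})
  (xe xstar xd : 'cV[R]_n) (e : 'cV[R]_N) :
  \rank H = n ->
  0 < eps ->
  (0 < #|T|)%N ->
  \rank (subrows (~: T) H) = n ->
  (#|T|%:R > sigma_min_nz (subrows (~: T) H) ^+ 2 / sigma_max (subrows T H) ^+ 2) ->
  (exists w : 'cV[R]_N, (exists v : 'cV[R]_n, w = H *m v) /\
      norm1 (subrows T w) > norm1 (subrows (~: T) w)) ->
  (* xe is an optimal solution of max ||H_T x||_1 s.t. ||H_{T^c} x||_1 <= eps *)
  norm1 (subrows (~: T) H *m xe) <= eps ->
  (forall x : 'cV[R]_n, norm1 (subrows (~: T) H *m x) <= eps ->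
      norm1 (subrows T H *m x) <= norm1 (subrows T H *m xe)) ->
  (* attack vector: e_T = H_T xe, e_{T^c} = 0 *)
  subrows T e = subrows T H *m xe ->
  subrows (~: T) e = 0 ->
  (* xd = D(y), y = H xstar + e *)
  l1_decoder H (H *m xstar + e) xd ->
  let bound := (sigma1 H T - 1) /
      (Num.sqrt (#|T|%:R) * sigma_max (subrows T H) - sigma_min_nz (subrows (~: T) H)) * eps in
  [/\ bound <= norm2 (xstar - xd), 0 < bound,
      norm2 (H *m xstar + e - H *m xd) <= eps &
      forall alpha : R, alpha <= bound -> attack_successful H xstar e eps alpha].
Proof.
move=> rH eps0 T0 rTc hT [w [[v0 ->] hw]] xe_feas xe_opt eT eTc dec bound.
rewrite !subrowsM in hw.
set HT := subrows T H in hw xe_opt eT bound *.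
set Hc := subrows (~: T) H in hw xe_feas xe_opt rTc hT bound *.
set smx := sigma_max HT in hT bound *.
set smn := sigma_min_nz Hc in hT bound *.
set s1 := sigma1 H T in bound *.
set K := norm1 (HT *m xe).
have smx0 : 0 <= smx by exact: sqrtr_ge0.
have smn0 : 0 <= smn by exact: sqrtr_ge0.
have sT0 : 0 <= Num.sqrt (#|T|%:R : R) by exact: sqrtr_ge0.
set a0 := norm1 (HT *m v0) in hw.
set b0 := norm1 (Hc *m v0) in hw.
have v00 : v0 != 0.
  apply/eqP => v0E; move: hw; rewrite /a0 /b0 v0E !mulmx0 !norm10 ltxx //.
have bpos : forall v, v != 0 -> 0 < norm1 (Hc *m v).
  move=> v v0'; rewrite lt_neqAle norm1_ge0 andbT; apply/eqP => /esym /norm1_eq0.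
  by move/(rank_inj rTc) => vE; move: v0'; rewrite vE eqxx.
have b0pos : 0 < b0 := bpos v0 v00.
set S1 := [set r : R | exists2 v : 'cV[R]_n, v != 0 &
        r = norm1 (HT *m v) / norm1 (Hc *m v)]%classic.
have s1E : s1 = sup S1 by [].
have S1ub : ubound S1 (K / eps).
  move=> r [v vn0 ->].
  have bp := bpos v vn0.
  set a := norm1 (HT *m v); set b := norm1 (Hc *m v).
  have hx : norm1 (Hc *m ((eps / b) *: v)) <= eps.
    rewrite -scalemxAr norm1Z ger0_norm; last by rewrite divr_ge0 // ltW.
    by rewrite -/b divfK ?gt_eqF.
  have := xe_opt _ hx; rewrite -scalemxAr norm1Z ger0_norm; last by rewrite divr_ge0 // ltW.
  rewrite -/a -/K => hK.
  rewrite ler_pdivlMr //; apply: le_trans hK; rewrite le_eqVlt; apply/orP; left; apply/eqP.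
  by rewrite mulrAC [a * eps]mulrC mulrAC.
have S1ne : (S1 !=set0)%classic by exists (a0 / b0); exists v0.
have s1le : s1 <= K / eps by rewrite s1E; apply: ge_sup.
have s1ge : a0 / b0 <= s1 by rewrite s1E; apply: ub_le_sup; [exists (K / eps) | exists v0].
have s1gt1 : 1 < s1.
  by apply: lt_le_trans s1ge; rewrite ltr_pdivlMr // mul1r.
have s1K : s1 * eps <= K by rewrite -ler_pdivlMr.
have smxpos : 0 < smx.
  rewrite lt_neqAle smx0 andbT; apply/eqP => smxE.
  have h1 := norm1_le_norm2 (HT *m v0).
  have h2 := sigma_max_ub HT v0.
  rewrite -/smx -smxE mul0r in h2.
  have : a0 <= 0.
    apply: le_trans h1 _; rewrite -/a0 mulr_ge0_le0 //.

  by rewrite leNgt (le_lt_trans (norm1_ge0 _) hw).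
set D := Num.sqrt (#|T|%:R) * smx - smn in bound *.
have Dpos : 0 < D.
  rewrite /D subr_gt0.
  move: hT; rewrite ltr_pdivrMr ?exprn_gt0 // => hT.
  have sq : Num.sqrt (#|T|%:R : R) ^+ 2 = #|T|%:R by rewrite sqr_sqrtr ?ler0n.
  rewrite -sq -exprMn in hT; have q0 := mulr_ge0 sT0 smx0.
  move: hT q0; set q := _ * smx => hT q0; nra.
have bpos' : 0 < bound.
  by rewrite /bound mulr_gt0 // divr_gt0 // subr_gt0.
have key : forall xd', l1_decoder H (H *m xstar + e) xd' ->
    bound <= norm2 (xstar - xd') /\ norm2 (H *m xstar + e - H *m xd') <= eps.
  move=> xd' dec'.
  set u := xd' - xstar.
  have resE : H *m xstar + e - H *m xd' = e - H *m u.
    by rewrite /u mulmxBr opprB addrA [e + _]addrC.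
  have hdec := dec' (xstar + xe).
  have r1 : norm1 (H *m xstar + e - H *m (xstar + xe)) <= eps.
    have -> : H *m xstar + e - H *m (xstar + xe) = e - H *m xe.
      by rewrite mulmxDr opprD addrACA subrr add0r.
    rewrite (norm1_split T) subrowsB subrowsM eT -/HT subrr norm10 add0r.
    by rewrite subrowsB subrowsM eTc -/Hc sub0r norm1N.
  have r2 : norm1 (H *m xstar + e - H *m xd') <= eps := le_trans hdec r1.
  split; last by apply: le_trans (norm2_le_norm1 _) r2.
  rewrite resE (norm1_split T) !subrowsB !subrowsM eT eTc -/HT -/Hc sub0r norm1N in r2.
  have tri : K <= norm1 (HT *m xe - HT *m u) + norm1 (HT *m u).
    by rewrite /K -{1}(subrK (HT *m u) (HT *m xe)) norm1D.
  have c1 : norm1 (HT *m u) <= Num.sqrt (#|T|%:R) * (smx * norm2 u).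
    apply: le_trans (norm1_le_norm2 _) _; rewrite ler_wpM2l //.
    exact: sigma_max_ub.
  have c2 : smn * norm2 u <= norm1 (Hc *m u).
    apply: le_trans (sigma_min_lb u rTc) (norm2_le_norm1 _).
  have nuE : norm2 (xstar - xd') = norm2 u by rewrite -opprB norm2N.
  rewrite nuE /bound mulrAC ler_pdivrMr //.
  have nu0 := norm2_ge0 u.
  rewrite /D; nra.
have [k1 k2] := key xd dec.
split => // alpha alb xd' dec'.
have [k1' k2'] := key xd' dec'.
by split => //; apply: le_trans alb k1'.
Qed.
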